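(* Consider any sequence of a total of $R$ operations, each of which is either an execution of the procedure $\textsc{Insert\_Rule}(r)$ or of the procedure $\textsc{Remove\_Rule}(r)$ (both described in the context), starting from the initial state. The worst-case time complexity of performing all of these operations is $O(RK\log M)$, where $K$ is the number of atoms and $M$ is the maximum number of overlapping rules per network switch (i.e. the maximum, over nodes $s$ and atoms $\alpha$, of the number of rules $r$ with $\mathrm{source}(r)=s$ whose interval contains $\alpha$).
   Context: Fix a positive integer $k$ and let $\mathsf{MIN}=0$, $\mathsf{MAX}=2^k$. A (forwarding) rule $r$ has: a half-closed interval $[\mathrm{lo}(r):\mathrm{hi}(r))$ of integers with $\mathsf{MIN}\le \mathrm{lo}(r)<\mathrm{hi}(r)\le\mathsf{MAX}$ (the interval corresponding to an IP prefix); a priority $\mathrm{priority}(r)$; and a directed edge $\mathrm{link}(r)$ of a fixed graph (the network topology), whose tail node is denoted $\mathrm{source}(r)$. Rules with the same source whose intervals overlap have pairwise distinct priorities. Atom representation: an ordered map $\mathfrak{M}$ (a balanced binary search tree with logarithmic-time insertion and lookup) from integers to atom identifiers, initialized to $\{\mathsf{MIN}\mapsto\alpha_0,\ \mathsf{MAX}\mapsto\alpha_\infty\}$; new identifiers are drawn from a counter increasing consecutively from $0$. For each key $n<\mathsf{MAX}$ with $n\mapsto\alpha$ in $\mathfrak{M}$, the atom $\alpha$ denotes the interval $[n:n')$ where $n'$ is the next larger key. For a rule $r$, $[\![r]\!]$ denotes the set of atoms whose intervals are contained in $[\mathrm{lo}(r):\mathrm{hi}(r))$. The procedure $\textsc{Create\_Atoms}^+(r)$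 inserts $\mathrm{lo}(r)$ and $\mathrm{hi}(r)$ into $\mathfrak{M}$ (each only if not already a key) with fresh identifiers, and returns the set $\Delta$ (of size at most 2) of delta-pairs $\alpha\mapsto\alpha'$, meaning that the interval previously denoted by the existing atom $\alpha$ is now split into $\alpha$ (lower part) and the new atom $\alpha'$ (upper part). Global state: $\mathit{label}[\ell]$, a set of atoms for each link $\ell$ (initially empty); $\mathit{owner}$, an array indexed by atoms where $\mathit{owner}[\alpha]$ is a hash table mapping a node $s$ to a balanced binary search tree $\mathit{owner}[\alpha][s]$ of the rules $r$ with $\mathrm{source}(r)=s$ and $\alpha\in[\![r]\!]$, ordered by priority (supporting insertion, removal, emptiness test and retrieval of the highest-priority rule). $\textsc{Insert\_Rule}(r)$: (1) $\Delta\gets\textsc{Create\_Atoms}^+(r)$; for each $\alpha\mapsto\alpha'$ in $\Delta$: set $\mathit{owner}[\alpha']\gets$ a copy of $\mathit{owner}[\alpha]$, and for each entry $s\mapsto \mathit{bst}$ in $\mathit{owner}[\alpha]$, let $r'$ be the highest-priority rule of $\mathit{bst}$ and add $\alpha'$ to $\mathit{label}[\mathrm{link}(r')]$. (2) For each $\alpha\in[\![r]\!]$: let $\mathit{bst}=\mathit{owner}[\alpha][\mathrm{source}(r)]$ and $r'$ its highest-priority rule (or none if empty); if there is no $r'$ or $\mathrm{priority}(r')<\mathrm{priority}(r)$, add $\alpha$ to $\mathit{label}[\mathrm{link}(r)]$ and, if $r'$ exists and $\mathrm{link}(r')\ne\mathrm{link}(r)$, remove $\alpha$ from $\mathit{label}[\mathrm{link}(r')]$;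 finally insert $r$ into $\mathit{bst}$. $\textsc{Remove\_Rule}(r)$: for each $\alpha\in[\![r]\!]$: let $\mathit{bst}=\mathit{owner}[\alpha][\mathrm{source}(r)]$, $r'$ its highest-priority rule; remove $r$ from $\mathit{bst}$; if $r'=r$, remove $\alpha$ from $\mathit{label}[\mathrm{link}(r)]$, and if $\mathit{bst}$ is now nonempty, add $\alpha$ to $\mathit{label}[\mathrm{link}(r'')]$ where $r''$ is the new highest-priority rule of $\mathit{bst}$. *)

(* Defs.v *)
From HB Require Import structures.
From mathcomp Require Import all_boot.
Set Implicit Arguments. Unset Strict Implicit. Unset Printing Implicit Defensive.

(* A link is a directed edge (tail, head) of the topology; nodes are nat. *)
Record rule := Rule { lo : nat; hi : nat; priority : nat; link : nat * nat }.

Definition source (r : rule) : nat := (link r).1.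

Definition rule_code (r : rule) := (lo r, hi r, priority r, link r).
Definition rule_decode (x : nat * nat * nat * (nat * nat)) :=
  let: (a, b, c, d) := x in Rule a b c d.
Lemma rule_codeK : cancel rule_code rule_decode. Proof. by case. Qed.
HB.instance Definition _ := Equality.copy rule (can_type rule_codeK).

(* Cost of a logarithmic-time operation on a balanced structure of size m *)
Definition lg (m : nat) : nat := (trunc_log 2 m).+1.

(* State.
   amap   : the ordered map M as a key-sorted association list key |-> atom id
   next_id: the fresh identifier counter
   label  : label[l] for each link l (a set of atoms, as a duplicate-free list)
   owner  : owner[alpha] : a hash table (association list) node |-> BST, the
            BST of rules being represented by the list of its elements. *)
Record state := St {
  amap : seq (nat * nat);
  next_id : nat;
  label : nat * nat -> seq nat;
  owner : nat -> seq (nat * seq rule)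
}.

Definition MAXK (k : nat) := 2 ^ k.

(* initial state: M = {MIN |-> alpha_0, MAX |-> alpha_inf} with ids 0 and 1 *)
Definition init_state (k : nat) : state :=
  St [:: (0, 0); (MAXK k, 1)] 2 (fun _ => [::]) (fun _ => [::]).

(* hash-table primitives (O(1) each) *)
Fixpoint hlookup (s : nat) (h : seq (nat * seq rule)) : seq rule :=
  match h with
  | [::] => [::]
  | (s', b) :: h' => if s' == s then b else hlookup s h'
  end.
Fixpoint hupdate (s : nat) (b : seq rule) (h : seq (nat * seq rule)) :=
  match h with
  | [::] => [:: (s, b)]
  | (s', b') :: h' => if s' == s then (s, b) :: h' else (s', b') :: hupdate s b h'
  end.

Definition top (b : seq rule) : option rule :=
  foldr (fun x acc => match acc with
                      | None => Some x
                      | Some y => if priority y < priority x then Some x else Some y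
                      end) None b.

(* label-set primitives (hash sets, O(1) each) *)
Definition set_add (x : nat) (l : seq nat) := if x \in l then l else x :: l.
Definition set_del (x : nat) (l : seq nat) := [seq y <- l | y != x].

Definition upd_label (st : state) (l : nat * nat) (f : seq nat -> seq nat) : state :=
  St (amap st) (next_id st)
     (fun l' => if l' == l then f (label st l) else label st l') (owner st).
Definition upd_owner (st : state) (a : nat) (h : seq (nat * seq rule)) : state :=
  St (amap st) (next_id st) (label st)
     (fun a' => if a' == a then h else owner st a').

(* Create_Atoms+ : insert key n (if absent); returns new state, the optional
   delta pair alpha |-> alpha', and the cost (one ordered-map lookup/insert). *)
Definition create_atom (n : nat) (st : state) : state * seq (nat * nat) * nat :=
  let m := amap st in
  let c := lg (size m) in
  if n \in unzip1 m then (st, [::], c)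
  else
    let below := [seq p <- m | p.1 < n] in
    let above := [seq p <- m | n < p.1] in
    let alpha := (last (0, 0) below).2 in
    let a' := next_id st in
    (St (below ++ (n, a') :: above) a'.+1 (label st) (owner st),
     [:: (alpha, a')], c).

(* atoms of the map, with their intervals [n : n') *)
Definition atom_intervals (m : seq (nat * nat)) : seq (nat * nat * nat) :=
  [seq (p.1.2, p.1.1, p.2.1) | p <- zip m (behead m)].

(* [[r]] : atoms whose interval is contained in [lo r : hi r) *)
Definition den (m : seq (nat * nat)) (r : rule) : seq nat :=
  [seq x.1.1 | x <- atom_intervals m & (lo r <= x.1.2) && (x.2 <= hi r)].

Definition enum_cost (m : seq (nat * nat)) (r : rule) : nat :=
  lg (size m) + size (den m r).

(* step (1) for one delta pair alpha |-> alpha' *)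
Definition process_delta (acc0 : state * nat) (d : nat * nat) : state * nat :=
  let: (st, c0) := acc0 in
  let: (a, a') := d in
  let own := owner st a in
  (* copying the hash table together with its BSTs *)
  let copy_cost := \sum_(e <- own) (size e.2).+1 in
  let st1 := upd_owner st a' own in
  foldl (fun (acc : state * nat) (e : nat * seq rule) =>
           let: (s, b) := e in
           let: (st', c) := acc in
           match top b with
           | None => (st', c + lg (size b))
           | Some r' => (upd_label st' (link r') (set_add a'), c + lg (size b) + 1)
           end) (st1, c0 + copy_cost) own.

(* step (2) for one atom alpha *)
Definition insert_at (r : rule) (acc : state * nat) (a : nat) : state * nat :=
  let: (st, c) := acc in
  let h := owner st a in
  let b := hlookup (source r) h in
  let c1 := c + 1 + lg (size b) in          (* hash lookup + retrieve max *)
  let st1 :=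
    match top b with
    | None => upd_label st (link r) (set_add a)
    | Some r' =>
        if priority r' < priority r then
          let st' := upd_label st (link r) (set_add a) in
          if link r' != link r then upd_label st' (link r') (set_del a) else st'
        else st
    end in
  (upd_owner st1 a (hupdate (source r) (r :: b) h),
   c1 + 2 + lg (size b)).                   (* label ops + BST insertion *)

Definition insert_rule (r : rule) (st : state) : state * nat :=
  let: (st1, d1, c1) := create_atom (lo r) st in
  let: (st2, d2, c2) := create_atom (hi r) st1 in
  let: (st3, c3) := foldl process_delta (st2, c1 + c2) (d1 ++ d2) in
  foldl (insert_at r) (st3, c3 + enum_cost (amap st3) r) (den (amap st3) r).

Definition remove_at (r : rule) (acc : state * nat) (a : nat) : state * nat :=
  let: (st, c) := acc in
  let h := owner st a in
  let b := hlookup (source r) h in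
  let b' := rem r b in
  let c1 := c + 1 + lg (size b) + lg (size b) in (* lookup + max + BST removal *)
  let st1 :=
    if top b == Some r then
      let st' := upd_label st (link r) (set_del a) in
      match top b' with
      | None => st'
      | Some r'' => upd_label st' (link r'') (set_add a)
      end
    else st in
  (upd_owner st1 a (hupdate (source r) b' h),
   c1 + 2 + lg (size b')).             (* emptiness test, new max, label ops *)

Definition remove_rule (r : rule) (st : state) : state * nat :=
  foldl (remove_at r) (st, enum_cost (amap st) r) (den (amap st) r).

Inductive op := Ins of rule | Rem of rule.

Definition step (st : state) (o : op) : state * nat :=
  match o with Ins r => insert_rule r st | Rem r => remove_rule r st end.

Fixpoint run_cost (st : state) (ops : seq op) : nat :=
  match ops with
  | [::] => 0
  | o :: os => (step st o).2 + run_cost (step st o).1 os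
  end.

Fixpoint states (st : state) (ops : seq op) : seq state :=
  match ops with
  | [::] => [:: st]
  | o :: os => st :: states (step st o).1 os
  end.

Definition upd_rules (rs : seq rule) (o : op) : seq rule :=
  match o with Ins r => r :: rs | Rem r => rem r rs end.

Fixpoint rule_sets (rs : seq rule) (ops : seq op) : seq (seq rule) :=
  match ops with
  | [::] => [:: rs]
  | o :: os => rs :: rule_sets (upd_rules rs o) os
  end.

Definition distinct_prios (rs : seq rule) : Prop :=
  forall r1 r2, r1 \in rs -> r2 \in rs -> r1 != r2 ->
    source r1 = source r2 -> lo r1 < hi r2 -> lo r2 < hi r1 ->
    priority r1 != priority r2.

Definition wf_rule (k : nat) (E : rel nat) (r : rule) : Prop :=
  lo r < hi r <= MAXK k /\ E (link r).1 (link r).2.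

Fixpoint valid_from (k : nat) (E : rel nat) (rs : seq rule) (ops : seq op) : Prop :=
  match ops with
  | [::] => True
  | o :: os =>
      match o with
      | Ins r => wf_rule k E r /\ r \notin rs
      | Rem r => wf_rule k E r /\ r \in rs
      end /\ distinct_prios (upd_rules rs o) /\ valid_from k E (upd_rules rs o) os
  end.

(* K: number of atoms (keys < MAX of the ordered map) after all operations *)
Definition num_atoms (k : nat) (ops : seq op) : nat :=
  count (fun p : nat * nat => p.1 < MAXK k) (amap (last (init_state k) (states (init_state k) ops))).

Definition overlap_at (rs : seq rule) (s n n' : nat) : nat :=
  count (fun r => (source r == s) && (lo r <= n) && (n' <= hi r)) rs.

(* max over atoms and nodes (nodes that are not the source of an installed
   rule contribute 0) *)
Definition max_overlap (st : state) (rs : seq rule) : nat :=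
  \max_(x <- atom_intervals (amap st)) \max_(s <- map source rs)
     overlap_at rs s x.1.2 x.2.

(* M: maximum over all points of time of the sequence *)
Definition max_overlap_run (k : nat) (ops : seq op) : nat :=
  \max_(p <- zip (states (init_state k) ops) (rule_sets [::] ops)) max_overlap p.1 p.2.

(* Main.v *)
Require Import Defs.
From mathcomp Require Import all_boot zify.
Set Implicit Arguments. Unset Strict Implicit. Unset Printing Implicit Defensive.


Fixpoint AI (m : seq (nat * nat)) : seq (nat * nat * nat) :=
  match m with
  | a :: ((b :: _) as t) => (a.2, a.1, b.1) :: AI t
  | _ => [::]
  end.

Lemma AIE m : atom_intervals m = AI m.
Proof.
elim: m => [|a [|b t] IH] //=.
by rewrite /atom_intervals /= in IH *; rewrite IH.
Qed.

Lemma AI_cat s u t : AI (s ++ u :: t) = AI (rcons s u) ++ AI (u :: t).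
Proof.
elim: s => [|a s IH]; first by [].
case: s IH => [|b s] IH; first by [].
exact: (congr1 (cons (a.2,a.1,b.1)) IH).
Qed.

Lemma AI_keys m x : x \in AI m -> (x.1.2 \in unzip1 m) && (x.2 \in unzip1 m).
Proof.
elim: m => [|a [|b t] IH] //=.
rewrite inE => /orP [/eqP -> /=|/IH]; first by rewrite !inE !eqxx orbT.
by case/andP=> /= h1 h2; rewrite !inE /= in h1 h2 *; rewrite h1 h2 !orbT.
Qed.

Lemma AI_ids m : subseq [seq x.1.1 | x <- AI m] (unzip2 m).
Proof.
elim: m => [|a [|b t] IH]; [by []| exact: sub0seq |].
have -> : [seq x.1.1 | x <- AI [:: a, b & t]] = [:: a.2] ++ [seq x.1.1 | x <- AI (b :: t)] by [].
have -> : unzip2 [:: a, b & t] = [:: a.2] ++ unzip2 (b :: t) by [].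
by apply: cat_subseq => //; rewrite subseq_refl.
Qed.

Lemma AI_size m : size (AI m) <= size m.
Proof. elim: m => [|a [|b t] IH] //=. Qed.

Lemma AI_notinside m x y : sorted ltn (unzip1 m) -> x \in AI m -> y \in unzip1 m ->
  (y <= x.1.2) || (x.2 <= y).
Proof.
elim: m => [|a [|b t] IH] // Hs0.
have Hs : path ltn a.1 (b.1 :: unzip1 t) := Hs0.
have Hall := order_path_min ltn_trans Hs.
have Hs' := path_sorted Hs.
change (x \in (a.2,a.1,b.1) :: AI (b :: t) -> y \in a.1 :: b.1 :: unzip1 t -> (y <= x.1.2) || (x.2 <= y)).
rewrite inE => /orP [/eqP -> /=|Hx].
  rewrite !inE => /or3P [/eqP ->|/eqP ->|Hy].
  - by rewrite leqnn.
  - by apply/orP; right; apply: leqnn.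
  - move: (order_path_min ltn_trans (Hs' : path ltn b.1 (unzip1 t))) => /allP /(_ _ Hy) h.
    by apply/orP; right; apply: ltnW.
rewrite inE => /orP [/eqP ->|Hy]; last by apply: IH.
have /andP [h1 _] := AI_keys Hx.
move: Hall => /allP /(_ _ h1) h. by apply/orP; left; apply: ltnW.
Qed.

Lemma uniq_map_eq (T U : eqType) (f : T -> U) s x y : uniq (map f s) -> x \in s -> y \in s -> f x = f y -> x = y.
Proof.
elim: s => [|a s IH] //= /andP [Ha Hu].
rewrite !inE => /orP [/eqP ->|Hx] /orP [/eqP ->|Hy] //.
- move=> E; move: Ha; by rewrite E map_f.
- move=> E; move: Ha; by rewrite -E map_f.
- exact: IH.
Qed.

Lemma filt_nil (T : eqType) (P : pred T) (s : seq T) : (forall z, z \in s -> ~~ P z) -> filter P s = [::].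
Proof. by move=> H; apply/eqP; rewrite -size_eq0 size_filter -leqn0 leqNgt -has_count; apply/hasPn. Qed.

Lemma decomp n : forall (t : seq (nat * nat)) (h a : nat), sorted ltn (unzip1 ((h, a) :: t)) -> h < n -> n \notin unzip1 t ->
  (exists2 b, b \in unzip1 t & n < b) ->
  exists B p al q be A, [/\ (h, a) :: t = B ++ (p, al) :: (q, be) :: A, p < n < q,
    [seq z <- (h, a) :: t | z.1 < n] = rcons B (p, al) &
    [seq z <- (h, a) :: t | n < z.1] = (q, be) :: A].
Proof.
elim=> [|[h2 a2] t IH] h a Hs Hh Hn [b Hb Hnb] //.
move: Hn; rewrite inE negb_or => /andP [Hn2 Hn].
have Hs' := path_sorted Hs.
have Hall := order_path_min ltn_trans Hs'.
case: (ltngtP n h2) => Hc.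
- exists [::], h, a, h2, a2, t; split=> //; first by rewrite Hh Hc.
  + rewrite /= Hh ltnNge (ltnW Hc) /=.
    congr cons; apply: filt_nil => z Hz /=; rewrite -leqNgt.
    move/allP: Hall => /(_ z.1 (map_f _ Hz)) h'. simpl in h'. lia.
  + rewrite /= ltnNge (ltnW Hh) /= Hc /=; congr cons.
    apply/all_filterP/allP => z Hz.
    move/allP: Hall => /(_ z.1 (map_f _ Hz)) h'. simpl in h'; simpl; lia.
- have [|B [p [al [q [be [A [E1 E2 E3 E4]]]]]]] := IH h2 a2 Hs' Hc Hn.
    move: Hb; rewrite inE => /orP [/eqP E|]; last by exists b.
    by move: Hnb; rewrite E => /(ltn_trans Hc); rewrite ltnn.
  exists ((h, a) :: B), p, al, q, be, A; split=> //.
  + by rewrite E1.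
  + transitivity ((h, a) :: [seq z <- (h2, a2) :: t | z.1 < n]); first by rewrite {1}/filter Hh.
    by rewrite E3.
  + transitivity [seq z <- (h2, a2) :: t | n < z.1]; first by rewrite {1}/filter ltnNge (ltnW Hh).
    by rewrite E4.
- by move: Hn2; rewrite Hc eqxx.
Qed.


Definition sumsz (h : seq (nat * seq rule)) : nat := \sum_(e <- h) size e.2.

Definition Pr (s : nat) (x : nat * nat * nat) (r : rule) : bool :=
  (source r == s) && (lo r <= x.1.2) && (x.2 <= hi r).

Record Inv (k : nat) (m : seq (nat * nat)) (nid : nat) (O : nat -> seq (nat * seq rule))
  (rs : seq rule) (i : nat) : Prop := {
 iv_sorted : sorted ltn (unzip1 m);
 iv_0 : 0 \in unzip1 m;
 iv_max : MAXK k \in unzip1 m;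
 iv_le : all (fun x => x <= MAXK k) (unzip1 m);
 iv_uid : uniq (unzip2 m);
 iv_lt : all (fun a => a < nid) (unzip2 m);
 iv_rs : forall r, r \in rs -> (lo r \in unzip1 m) && (hi r \in unzip1 m);
 iv_own : forall x, x \in AI m ->
   (forall s, perm_eq (hlookup s (O x.1.1)) (filter (Pr s x) rs)) /\
   size (O x.1.1) <= i /\ sumsz (O x.1.1) <= i }.

Definition updO (O : nat -> seq (nat * seq rule)) (a' al : nat) :=
  fun x => if x == a' then O al else O x.

Definition applyd O (d : seq (nat * nat)) := foldl (fun O p => updO O p.2 p.1) O d.

Fixpoint dbnd i O (d : seq (nat * nat)) : Prop :=
  match d with
  | [::] => True
  | p :: d' => [/\ size (O p.1) <= i, sumsz (O p.1) <= i & dbnd i (updO O p.2 p.1) d']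
  end.

Lemma sorted_ins (s : seq nat) p q t n : sorted ltn (s ++ p :: q :: t) -> p < n -> n < q ->
  sorted ltn (s ++ p :: n :: q :: t).
Proof.
move=> Hs h1 h2.
have H : forall c s, path ltn c (s ++ p :: q :: t) -> path ltn c (s ++ p :: n :: q :: t).
  move=> c s0; elim: s0 c => [|d s0 IH] c /=.
    by case/andP=> -> /andP [_ ->]; rewrite h1 h2.
  by case/andP=> -> /IH ->.
case: s Hs => [|d s] /=.
  by case/andP=> _ ->; rewrite h1 h2.
exact: H.
Qed.

Lemma split_hi (a p n q : nat) : p < n < q -> (a <= p) || (q <= a) -> (n <= a) = (q <= a).
Proof. move=> /andP [h1 h2] /orP [h|h]; apply/idP/idP => h'; lia. Qed.
Lemma split_lo (a p n q : nat) : p < n < q -> (a <= p) || (q <= a) -> (a <= n) = (a <= p).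
Proof. move=> /andP [h1 h2] /orP [h|h]; apply/idP/idP => h'; lia. Qed.

Lemma create_spec k n st O rs i st1 d c :
  Inv k (amap st) (next_id st) O rs i -> n <= MAXK k -> create_atom n st = (st1, d, c) ->
  [/\ c = lg (size (amap st)), owner st1 = owner st, n \in unzip1 (amap st1),
      {subset unzip1 (amap st) <= unzip1 (amap st1)} &
      [/\ size (amap st1) = size (amap st) + size d, size d <= 1,
          Inv k (amap st1) (next_id st1) (applyd O d) rs i & dbnd i O d]].
Proof.
move=> Hinv HnM; rewrite /create_atom; case: ifP => Hn.
  by case=> <- <- <-; split=> //; split=> //; rewrite addn0.
case: Hinv => Hs H0 HM Hle Hu Hlt Hrs Hown.
have [h [a [t Em]]] : exists h a t, amap st = (h, a) :: t.
  by move: H0; case: (amap st) => [|[h a] t] //; exists h, a, t.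
have Hpath : path ltn h (unzip1 t) by move: Hs; rewrite Em.
have Hallt := order_path_min ltn_trans Hpath.
have Hh : h < n.
  move: H0 Hn; rewrite Em /= inE => /orP [/eqP <-|H0].
    by move/negbT; rewrite inE negb_or lt0n => /andP [-> _].
  by move/allP: Hallt => /(_ _ H0).
have Hnt : n \notin unzip1 t by move/negbT: Hn; rewrite Em /= inE negb_or => /andP [].
have HnM' : n < MAXK k.
  rewrite ltn_neqAle HnM andbT; apply/negP => /eqP E; move: Hn; by rewrite E HM.
have Hb : exists2 b, b \in unzip1 t & n < b.
  exists (MAXK k) => //; move: HM; rewrite Em /= inE => /orP [/eqP E|] //.
  by move: Hh; rewrite -E => /(ltn_trans HnM'); rewrite ltnn.
have Hs' : sorted ltn (unzip1 ((h, a) :: t)) by rewrite -Em.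
have [B [p [al [q [be [A [E1 E2 E3 E4]]]]]]] := decomp Hs' Hh Hnt Hb.
rewrite -Em in E1 E3 E4.
rewrite E3 E4 last_rcons /= cat_rcons.
case=> <- <- <- /=; set m := amap st in E1 E3 E4 Hs Hle Hu Hlt Hrs Hown H0 HM *.
set nid := next_id st in Hlt Hown *.
have Hk : forall x, (x \in unzip1 (B ++ [:: (p, al), (n, nid), (q, be) & A])) = (x == n) || (x \in unzip1 m).
  move=> x; rewrite E1 /unzip1 /unzip2 !map_cat !mem_cat /= !inE.
  by case: (x == n); rewrite /= ?orbT ?orbF.
have Hi : forall x, (x \in unzip2 (B ++ [:: (p, al), (n, nid), (q, be) & A])) = (x == nid) || (x \in unzip2 m).
  move=> x; rewrite E1 /unzip1 /unzip2 !map_cat !mem_cat /= !inE.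
  by case: (x == nid); rewrite /= ?orbT ?orbF.
have Hsub : {subset unzip1 m <= unzip1 (B ++ [:: (p, al), (n, nid), (q, be) & A])}.
  by move=> x Hx; rewrite Hk Hx orbT.
have HnotI : nid \notin unzip2 m by apply/negP => /(allP Hlt); rewrite ltnn.
have HAIm : AI m = AI (rcons B (p, al)) ++ (al, p, q) :: AI ((q, be) :: A) by rewrite E1 AI_cat.
have HAIm' : AI (B ++ [:: (p, al), (n, nid), (q, be) & A]) =
   AI (rcons B (p, al)) ++ (al, p, n) :: (nid, n, q) :: AI ((q, be) :: A) by rewrite AI_cat.
have Halq : (al, p, q) \in AI m by rewrite HAIm mem_cat inE eqxx orbT.
have Hids : forall x, x \in AI m -> x.1.1 \in unzip2 m.
  by move=> x Hx; apply: (mem_subseq (AI_ids m)); apply: map_f.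
have Hal : al != nid by apply/negP => /eqP E; move: (Hids _ Halq); rewrite E /= (negbTE HnotI).
have [Hown1 [Hsz1 Hss1]] := Hown _ Halq.
split=> //.
- by rewrite Hk eqxx.
- split=> //.
  + by rewrite E1 !size_cat /= addn1 addnS.
  + split.
    * rewrite /unzip1 map_cat /=; apply: sorted_ins; [|by case/andP: E2 | by case/andP: E2].
      by move: Hs; rewrite E1 /unzip1 map_cat.
    * exact: Hsub.
    * exact: Hsub.
    * apply/allP => x; rewrite Hk => /orP [/eqP ->|Hx] //; exact: (allP Hle).
    * have Em2 : unzip2 m = [seq i.2 | i <- B] ++ [:: al, be & [seq i.2 | i <- A]] by rewrite E1 /unzip2 map_cat.
      rewrite /unzip2 map_cat /=.
      have -> : [seq i.2 | i <- B] ++ [:: al, nid, be & [seq i.2 | i <- A]] = rcons [seq i.2 | i <- B] al ++ nid :: be :: [seq i.2 | i <- A] by rewrite cat_rcons.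
      by rewrite -cat1s uniq_catCA cat1s cons_uniq cat_rcons -Em2 HnotI Hu.
    * apply/allP => x; rewrite Hi => /orP [/eqP ->|Hx] //; exact: ltnW (allP Hlt _ Hx).
    * by move=> r /Hrs /andP [h1 h2]; rewrite !Hsub.
    * have Hf1 : forall s, filter (Pr s (al, p, n)) rs = filter (Pr s (al, p, q)) rs.
        move=> s; apply: eq_in_filter => r Hr; rewrite /Pr /=.
        have /andP [hl hh] := Hrs r Hr; have := AI_notinside Hs Halq hh; rewrite /=.
        by move=> hc; rewrite (split_hi E2 hc).
      have Hf2 : forall s, filter (Pr s (nid, n, q)) rs = filter (Pr s (al, p, q)) rs.
        move=> s; apply: eq_in_filter => r Hr; rewrite /Pr /=.
        have /andP [hl hh] := Hrs r Hr; have := AI_notinside Hs Halq hl; rewrite /=.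
        by move=> hc; rewrite (split_lo E2 hc).
      move=> x; rewrite HAIm' mem_cat !inE => Hx.
      have [Hx1|Hx2] : (x == (al, p, n)) || (x == (nid, n, q)) \/ x \in AI m.
        move: Hx; rewrite HAIm mem_cat inE.
        case/orP => [->|/or3P [->|->|->]]; rewrite ?orbT; by [right|left|left|right].
      - rewrite /applyd /= /updO; case/orP: Hx1 => /eqP -> /=.
          by rewrite (negbTE Hal); split=> // s; rewrite Hf1.
        by rewrite eqxx; split=> // s; rewrite Hf2.
      - rewrite /applyd /= /updO.
        have Hne : x.1.1 != nid by apply/negP => /eqP E; move: (Hids _ Hx2); rewrite E (negbTE HnotI).
        by rewrite (negbTE Hne); apply: Hown.
Qed.


Lemma hlookup_upd s s' b h : hlookup s' (hupdate s b h) = if s == s' then b else hlookup s' h.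
Proof.
elim: h => [|[s0 b0] h IH] //=.
case: (eqVneq s0 s) => [->|Hne] /=.
  by case: (s == s').
rewrite IH; case: (eqVneq s0 s') => [E|] //.
by subst; rewrite eq_sym (negbTE Hne).
Qed.

Lemma size_upd s b h : size (hupdate s b h) <= (size h).+1.
Proof. elim: h => [|[s0 b0] h IH] //=; case: ifP => _ //=; lia. Qed.

Lemma sumsz_cons e h : sumsz (e :: h) = size e.2 + sumsz h.
Proof. by rewrite /sumsz big_cons. Qed.

Lemma sumsz_upd s b h : sumsz (hupdate s b h) + size (hlookup s h) = sumsz h + size b.
Proof.
elim: h => [|[s0 b0] h IH]; first by rewrite /= sumsz_cons /sumsz big_nil /=; lia.
rewrite /=; case: (eqVneq s0 s) => [->|Hne] /=.
  by rewrite !sumsz_cons /=; lia.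
by rewrite !sumsz_cons /=; lia.
Qed.

Lemma sum_succ (l : seq (nat * seq rule)) : \sum_(e <- l) (size e.2).+1 = sumsz l + size l.
Proof.
elim: l => [|e l IH]; first by rewrite big_nil /sumsz big_nil.
by rewrite big_cons sumsz_cons IH /=; lia.
Qed.

Lemma lg_le n : lg n <= n.+1.
Proof.
rewrite /lg ltnS; case: n => [|n]; first by rewrite trunc_log0.
apply: leq_trans (ltnW (ltn_expl _ (isT : 1 < 2))) (trunc_logP _ _) => //.
Qed.

Lemma lg_le' n : 0 < n -> lg n <= n.
Proof.
rewrite /lg; case: n => [|n] // _.
apply: leq_trans (ltn_expl _ (isT : 1 < 2)) (trunc_logP _ _) => //.
Qed.

Lemma lg_mono m n : m <= n -> lg m <= lg n.
Proof. by move=> h; rewrite /lg ltnS leq_trunc_log. Qed.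

Lemma lg_gt0 n : 0 < lg n. Proof. by []. Qed.

Lemma fold_labels (F : state * nat -> nat * seq rule -> state * nat) :
  (forall st c e, [/\ amap (F (st, c) e).1 = amap st, next_id (F (st, c) e).1 = next_id st,
      owner (F (st, c) e).1 = owner st & (F (st, c) e).2 <= c + size e.2 + 2]) ->
  forall l st c, let res := foldl F (st, c) l in
  [/\ amap res.1 = amap st, next_id res.1 = next_id st, owner res.1 = owner st &
      res.2 <= c + sumsz l + 2 * size l].
Proof.
move=> HF; elim=> [|e l IH] st c /=.
  by split=> //; rewrite /sumsz big_nil; lia.
have [E1 E2 E3 E4] := HF st c e.
case Ep: (F (st, c) e) => [st' c'].
rewrite Ep /= in E1 E2 E3 E4.
have [F1 F2 F3 F4] := IH st' c'.
split; try congruence.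
rewrite sumsz_cons; lia.
Qed.

Lemma pd_spec st c a a' : let res := process_delta (st, c) (a, a') in
  [/\ amap res.1 = amap st, next_id res.1 = next_id st, owner res.1 = updO (owner st) a' a &
   res.2 <= c + 2 * sumsz (owner st a) + 3 * size (owner st a)].
Proof.
rewrite /process_delta.
match goal with |- context [foldl ?F _ _] => set G := F end.
have HF : forall st0 c0 e, [/\ amap (G (st0, c0) e).1 = amap st0, next_id (G (st0, c0) e).1 = next_id st0,
      owner (G (st0, c0) e).1 = owner st0 & (G (st0, c0) e).2 <= c0 + size e.2 + 2].
  move=> st0 c0 [s b]; rewrite /G /=; have := lg_le (size b).
  case: (top b) => [r'|] /=; split=> //; lia.
have [E1 E2 E3 E4] := fold_labels HF (owner st a) (upd_owner st a' (owner st a)) (c + \sum_(e <- owner st a) (size e.2).+1).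
rewrite /= in E1 E2 E3 E4 *; split=> //.
rewrite sum_succ in E4 *; lia.
Qed.

Lemma dfold_spec i d : forall st c, dbnd i (owner st) d ->
  let res := foldl process_delta (st, c) d in
  [/\ amap res.1 = amap st, next_id res.1 = next_id st, owner res.1 = applyd (owner st) d &
      res.2 <= c + 5 * i * size d].
Proof.
elim: d => [|[a a'] d IH] st c.
  by move=> _ /=; split=> //; lia.
case=> h1 h2 hd.
have [E1 E2 E3 E4] := pd_spec st c a a'.
case Ep: (process_delta (st, c) (a, a')) => [st' c'].
rewrite Ep /= in E1 E2 E3 E4 h1 h2.
rewrite -E3 in hd.
have [F1 F2 F3 F4] := IH st' c' hd.
have -> : foldl process_delta (st, c) ((a, a') :: d) = foldl process_delta (st', c') d by rewrite -Ep.
split; try congruence.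
  by rewrite F3 E3.
have -> : size ((a, a') :: d) = (size d).+1 by [].
rewrite mulnS; lia.
Qed.


Lemma ins_fold r B L : uniq L -> forall st c,
  (forall a, a \in L -> 3 + 2 * lg (size (hlookup (source r) (owner st a))) <= B) ->
  let res := foldl (insert_at r) (st, c) L in
  [/\ amap res.1 = amap st, next_id res.1 = next_id st,
      (forall a, owner res.1 a = if a \in L then hupdate (source r) (r :: hlookup (source r) (owner st a)) (owner st a) else owner st a) &
      res.2 <= c + size L * B].
Proof.
elim: L => [|a L IH] Hu st c HB.
  by rewrite /=; split=> //; lia.
case/andP: Hu => HaL Hu.
case Ep: (insert_at r (st, c) a) => [st' c'].
have [E1 [E2 [E3 E4]]] : amap st' = amap st /\ next_id st' = next_id st /\
  owner st' = (fun x => if x == a then hupdate (source r) (r :: hlookup (source r) (owner st a)) (owner st a) else owner st x) /\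
  c' = c + 3 + 2 * lg (size (hlookup (source r) (owner st a))).
  move: Ep; rewrite /insert_at.
  case: (top _) => [r'|]; [case: ifP => _; [case: ifP => _|]|]; case=> <- <- /=; (split; [done|split; [done|split; [done|lia]]]).
have HB' : forall a0, a0 \in L -> 3 + 2 * lg (size (hlookup (source r) (owner st' a0))) <= B.
  move=> a0 Ha0; rewrite E3 /=; have -> : (a0 == a) = false.
    by apply/negP => /eqP E; move: HaL; rewrite -E Ha0.
  by apply: HB; rewrite inE Ha0 orbT.
have [F1 F2 F3 F4] := IH Hu st' c' HB'.
have -> : foldl (insert_at r) (st, c) (a :: L) = foldl (insert_at r) (st', c') L by rewrite -Ep.
have -> : size (a :: L) = (size L).+1 by [].
split; try congruence.
- move=> a0; rewrite F3 E3 /= inE.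
  case: (eqVneq a0 a) => [->|Hne] /=; first by rewrite (negbTE HaL).
  by [].
- have := HB a (mem_head _ _). lia.
Qed.

Lemma rem_fold r B L : uniq L -> forall st c,
  (forall a, a \in L -> 3 + 2 * lg (size (hlookup (source r) (owner st a))) +
     lg (size (rem r (hlookup (source r) (owner st a)))) <= B) ->
  let res := foldl (remove_at r) (st, c) L in
  [/\ amap res.1 = amap st, next_id res.1 = next_id st,
      (forall a, owner res.1 a = if a \in L then hupdate (source r) (rem r (hlookup (source r) (owner st a))) (owner st a) else owner st a) &
      res.2 <= c + size L * B].
Proof.
elim: L => [|a L IH] Hu st c HB.
  by rewrite /=; split=> //; lia.
case/andP: Hu => HaL Hu.
case Ep: (remove_at r (st, c) a) => [st' c'].
have [E1 [E2 [E3 E4]]] : amap st' = amap st /\ next_id st' = next_id st /\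
  owner st' = (fun x => if x == a then hupdate (source r) (rem r (hlookup (source r) (owner st a))) (owner st a) else owner st x) /\
  c' = c + 3 + 2 * lg (size (hlookup (source r) (owner st a))) + lg (size (rem r (hlookup (source r) (owner st a)))).
  move: Ep; rewrite /remove_at.
  case: ifP => _; [case: (top _) => [r'|]|]; case=> <- <- /=; (split; [done|split; [done|split; [done|lia]]]).
have HB' : forall a0, a0 \in L -> 3 + 2 * lg (size (hlookup (source r) (owner st' a0))) +
     lg (size (rem r (hlookup (source r) (owner st' a0)))) <= B.
  move=> a0 Ha0; rewrite E3 /=; have -> : (a0 == a) = false.
    by apply/negP => /eqP E; move: HaL; rewrite -E Ha0.
  by apply: HB; rewrite inE Ha0 orbT.
have [F1 F2 F3 F4] := IH Hu st' c' HB'.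
have -> : foldl (remove_at r) (st, c) (a :: L) = foldl (remove_at r) (st', c') L by rewrite -Ep.
have -> : size (a :: L) = (size L).+1 by [].
split; try congruence.
- move=> a0; rewrite F3 E3 /= inE.
  case: (eqVneq a0 a) => [->|Hne] /=; first by rewrite (negbTE HaL).
  by [].
- have := HB a (mem_head _ _). lia.
Qed.

Lemma den_mem m r x : uniq [seq y.1.1 | y <- AI m] -> x \in AI m ->
  (x.1.1 \in den m r) = (lo r <= x.1.2) && (x.2 <= hi r).
Proof.
move=> Hu Hx; rewrite /den AIE; apply/idP/idP.
  case/mapP => y; rewrite mem_filter => /andP [Hc Hy] E.
  by rewrite (uniq_map_eq Hu Hx Hy E).
by move=> Hc; apply: map_f; rewrite mem_filter Hc.
Qed.

Lemma den_uniq m r : uniq [seq y.1.1 | y <- AI m] -> uniq (den m r).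
Proof.
by move=> Hu; rewrite /den AIE; apply: subseq_uniq (map_subseq _ (filter_subseq _ _)) Hu.
Qed.

Lemma den_size m r : size (den m r) <= size m.
Proof.
rewrite /den AIE size_map size_filter; exact: leq_trans (count_size _ _) (AI_size m).
Qed.

Lemma den_inv m r a : a \in den m r -> exists2 x, x \in AI m & a = x.1.1.
Proof. by rewrite /den AIE => /mapP [y]; rewrite mem_filter => /andP [_ Hy] ->; exists y. Qed.

Lemma inv_uAI k m nid O rs i : Inv k m nid O rs i -> uniq [seq y.1.1 | y <- AI m].
Proof. by case=> _ _ _ _ Hu *; apply: subseq_uniq (AI_ids m) Hu. Qed.

Lemma filter_rem (P : pred rule) r s :
  filter P (rem r s) = if P r then rem r (filter P s) else filter P s.
Proof.
elim: s => [|y s IH] /=; first by case: (P r).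
case: (eqVneq y r) => [->|Hne].
  by case Hp: (P r) => /=; rewrite ?eqxx.
rewrite /= IH.

by case: (P y); case: (P r) => //=; rewrite (negbTE Hne).
Qed.

Lemma perm_rem2 (T : eqType) (x : T) (b F : seq T) : perm_eq b F -> perm_eq (rem x b) (rem x F).
Proof.
move=> H; case: (boolP (x \in b)) => Hx.
  have HxF : x \in F by rewrite -(perm_mem H).
  rewrite -(perm_cons x); apply: perm_trans (perm_trans _ H) (perm_to_rem HxF).
  by rewrite perm_sym perm_to_rem.
have HxF : x \notin F by rewrite -(perm_mem H).
by rewrite !rem_id.
Qed.

Lemma arith2 c b d i : c + b = d + b.+1 -> d <= i -> c <= i.+1.
Proof. lia. Qed.

Lemma ins_inv k m nid O O' rs i r : Inv k m nid O rs i -> lo r \in unzip1 m -> hi r \in unzip1 m ->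
  (forall a, O' a = if a \in den m r then hupdate (source r) (r :: hlookup (source r) (O a)) (O a) else O a) ->
  Inv k m nid O' (r :: rs) i.+1.
Proof.
move=> Hinv Hl Hh HO; have HuA := inv_uAI Hinv.
case: Hinv => Hs H0 HM Hle Hu Hlt Hrs Hown; split => //.
- by move=> r0; rewrite inE => /orP [/eqP ->|/Hrs] //; rewrite Hl Hh.
- move=> x Hx; have [Hp [Hsz Hss]] := Hown x Hx.
  rewrite HO (den_mem r HuA Hx); case: ifP => Hc.
  + split; [move=> s| split].
    * have HP : Pr s x r = (source r == s) by rewrite /Pr -andbA Hc andbT.
      rewrite hlookup_upd /= HP; case: (eqVneq (source r) s) => [<-|Hne] //.
      by rewrite perm_cons.
    * have := size_upd (source r) (r :: hlookup (source r) (O x.1.1)) (O x.1.1); lia.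
    * have := sumsz_upd (source r) (r :: hlookup (source r) (O x.1.1)) (O x.1.1); rewrite /=.
      move=> H2; exact: (arith2 H2 Hss).
  + split; [move=> s| split; lia].
    have HP : Pr s x r = false by rewrite /Pr -andbA Hc andbF.
    by rewrite /= HP.
Qed.

Lemma arith1 a b c d i : a <= b -> c + b = d + a -> d <= i -> c <= i.+1.
Proof. lia. Qed.

Lemma rem_inv k m nid O O' rs i r : Inv k m nid O rs i ->
  (forall a, O' a = if a \in den m r then hupdate (source r) (rem r (hlookup (source r) (O a))) (O a) else O a) ->
  Inv k m nid O' (rem r rs) i.+1.
Proof.
move=> Hinv HO; have HuA := inv_uAI Hinv.
case: Hinv => Hs H0 HM Hle Hu Hlt Hrs Hown; split => //.
- by move=> r0 /mem_rem /Hrs.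
- move=> x Hx; have [Hp [Hsz Hss]] := Hown x Hx.
  rewrite HO (den_mem r HuA Hx); case: ifP => Hc.
  + split; [move=> s| split].
    * have HP : Pr s x r = (source r == s) by rewrite /Pr -andbA Hc andbT.
      rewrite hlookup_upd filter_rem HP; case: (eqVneq (source r) s) => [<-|Hne] //.
      exact: perm_rem2.
    * have := size_upd (source r) (rem r (hlookup (source r) (O x.1.1))) (O x.1.1).
      by move=> H; apply: leq_trans H _; rewrite ltnS.
    * have := sumsz_upd (source r) (rem r (hlookup (source r) (O x.1.1))) (O x.1.1).
      have := size_subseq (rem_subseq r (hlookup (source r) (O x.1.1))).
      move=> H1 H2; exact: (arith1 H1 H2 Hss).
  + split; [move=> s| split; lia].
    have HP : Pr s x r = false by rewrite /Pr -andbA Hc andbF.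
    by rewrite filter_rem HP.
Qed.


Definition mo (m : seq (nat * nat)) (rs : seq rule) : nat :=
  \max_(x <- AI m) \max_(s <- map source rs) overlap_at rs s x.1.2 x.2.

Lemma mo_E st rs : max_overlap st rs = mo (amap st) rs.
Proof. by rewrite /max_overlap AIE. Qed.

Lemma mo_ge m rs x s : x \in AI m -> s \in map source rs -> count (Pr s x) rs <= mo m rs.
Proof.
move=> Hx Hs; rewrite /mo; apply: (bigmaxn_sup_seq x) => //.
by apply: (bigmaxn_sup_seq s) => //.
Qed.

Lemma arith3 y M : y <= M -> 3 + 2 * lg y <= 5 * lg M.
Proof. move=> h; have := lg_mono h; have := lg_gt0 M; lia. Qed.

Lemma arith4 y' y M : y' <= y -> y <= M -> 3 + 2 * lg y + lg y' <= 6 * lg M.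
Proof.
move=> h1 h2; have := lg_mono h2; have := lg_mono h1; have := lg_gt0 M; lia.
Qed.

Lemma inv_pos k m nid O rs i : Inv k m nid O rs i -> 0 < size m.
Proof. by case; case: m. Qed.

Lemma ov_bound k m nid O rs (rs' : seq rule) i r x : Inv k m nid O rs i -> x \in AI m ->
  r \in rs' -> count (Pr (source r) x) rs <= count (Pr (source r) x) rs' ->
  size (hlookup (source r) (O x.1.1)) <= mo m rs'.
Proof.
move=> Hinv Hx Hr Hc.
have [Hp _] := iv_own Hinv Hx.
rewrite (perm_size (Hp _)) size_filter.
apply: leq_trans Hc _; apply: mo_ge => //; exact: map_f.
Qed.

Lemma insert_spec k R r st rs i : Inv k (amap st) (next_id st) (owner st) rs i ->
  hi r <= MAXK k -> lo r <= MAXK k -> i <= R ->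
  let res := insert_rule r st in
  [/\ Inv k (amap res.1) (next_id res.1) (owner res.1) (r :: rs) i.+1,
      size (amap st) <= size (amap res.1) &
      res.2 + 5 * R * size (amap st) <= 9 * size (amap res.1) * lg (mo (amap res.1) (r :: rs)) + 5 * R * size (amap res.1)].
Proof.
move=> Hinv Hhi Hlo HiR.
rewrite /insert_rule.
case E1: (create_atom (lo r) st) => [[st1 d1] c1].
have [Hc1 Ho1 Hl1 Hs1 [Hz1 Hd1 Hinv1 Hb1]] := create_spec Hinv Hlo E1.
case E2: (create_atom (hi r) st1) => [[st2 d2] c2].
have [Hc2 Ho2 Hl2 Hs2 [Hz2 Hd2 Hinv2 Hb2]] := create_spec Hinv1 Hhi E2.
rewrite foldl_cat.
have Hb1' : dbnd i (owner st2) d1 by rewrite Ho2 Ho1.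
have [F1 F2 F3 F4] := dfold_spec (c1 + c2) Hb1'.
case Ep1: (foldl process_delta (st2, c1 + c2) d1) => [st2' c2'].
rewrite Ep1 /= in F1 F2 F3 F4.
have Hb2' : dbnd i (owner st2') d2 by rewrite F3 Ho2 Ho1.
have [G1 G2 G3 G4] := dfold_spec c2' Hb2'.
case Ep2: (foldl process_delta (st2', c2') d2) => [st3 c3].
rewrite Ep2 /= in G1 G2 G3 G4.
have Hinv3 : Inv k (amap st3) (next_id st3) (owner st3) rs i by rewrite G1 G2 G3 F1 F2 F3 Ho2 Ho1.
have Hlo3 : lo r \in unzip1 (amap st3) by rewrite G1 F1 Hs2.
have Hhi3 : hi r \in unzip1 (amap st3) by rewrite G1 F1.
set m := amap st3 in Hinv3 Hlo3 Hhi3 *.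
set X := lg (mo m (r :: rs)).
have HB : forall a, a \in den m r -> 3 + 2 * lg (size (hlookup (source r) (owner st3 a))) <= 5 * X.
  move=> a /den_inv [x Hx ->]; apply: arith3.
  apply: (ov_bound (rs' := r :: rs) Hinv3 Hx); first exact: mem_head.
  by rewrite /= leq_addl.
have [H1 H2 H3 H4] := ins_fold (den_uniq r (inv_uAI Hinv3)) (c3 + enum_cost m r) HB.
case Ep3: (foldl (insert_at r) _ _) => [st4 c4].
rewrite Ep3 /= in H1 H2 H3 H4.
have Hsz : size (amap st4) = size (amap st) + size d1 + size d2 by rewrite H1 /m G1 F1 Hz2 Hz1.
split.
- rewrite H1 H2; exact: ins_inv Hinv3 Hlo3 Hhi3 H3.
- by rewrite Hsz -addnA leq_addr.
- rewrite H1 -/m in Hsz *.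
  have Hpos := inv_pos Hinv.
  have Hc1' : c1 <= size (amap st) by rewrite Hc1 lg_le'.
  have Hc2' : c2 <= size (amap st1) by rewrite Hc2 lg_le' // (inv_pos Hinv1).
  have Hen : enum_cost m r <= 2 * size m.
    rewrite /enum_cost; have := den_size m r; have := lg_le' (inv_pos Hinv3); lia.
  have HL : size (den m r) * (5 * X) <= 5 * (size m * X) by rewrite [5 * (_ * _)]mulnCA leq_mul2r den_size orbT.
  have HX : size m <= size m * X by rewrite leq_pmulr // /X lg_gt0.
  have Hi1 : 5 * i * size d1 <= 5 * R * size d1 by rewrite leq_mul2r leq_mul2l HiR !orbT.
  have Hi2 : 5 * i * size d2 <= 5 * R * size d2 by rewrite leq_mul2r leq_mul2l HiR !orbT.
  have E5 : 5 * R * size m = 5 * R * size (amap st) + 5 * R * size d1 + 5 * R * size d2 by rewrite Hsz !mulnDr.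
  have Hs1z : size (amap st1) = size (amap st) + size d1 := Hz1.
  rewrite E5 -[9 * size m * X]mulnA /=.
  lia.
Qed.

Lemma remove_spec k r st rs i : Inv k (amap st) (next_id st) (owner st) rs i -> r \in rs ->
  let res := remove_rule r st in
  [/\ Inv k (amap res.1) (next_id res.1) (owner res.1) (rem r rs) i.+1, amap res.1 = amap st &
    res.2 <= 8 * size (amap st) * lg (mo (amap st) rs)].
Proof.
move=> Hinv Hr; rewrite /remove_rule.
set m := amap st in Hinv *.
set X := lg (mo m rs).
have HB : forall a, a \in den m r -> 3 + 2 * lg (size (hlookup (source r) (owner st a))) +
     lg (size (rem r (hlookup (source r) (owner st a)))) <= 6 * X.
  move=> a /den_inv [x Hx ->]; apply: arith4; first exact: size_subseq (rem_subseq _ _).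
  by apply: (ov_bound (rs' := rs) Hinv Hx).
have [H1 H2 H3 H4] := rem_fold (den_uniq r (inv_uAI Hinv)) (enum_cost m r) HB.
case Ep3: (foldl (remove_at r) _ _) => [st4 c4].
rewrite Ep3 /= in H1 H2 H3 H4.
split.
- rewrite H1 H2; exact: rem_inv Hinv H3.
- exact: H1.
- have Hen : enum_cost m r <= 2 * size m.
    rewrite /enum_cost; have := den_size m r; have := lg_le' (inv_pos Hinv); lia.
  have HL : size (den m r) * (6 * X) <= 6 * (size m * X) by rewrite [6 * (_ * _)]mulnCA leq_mul2r den_size orbT.
  have HX : size m <= size m * X by rewrite leq_pmulr // /X lg_gt0.
  rewrite -[8 * size m * X]mulnA /=.
  lia.
Qed.


Definition Mrun st rs ops :=
  \max_(p <- zip (states st ops) (rule_sets rs ops)) max_overlap p.1 p.2.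
Definition fin st ops := last st (states st ops).

Lemma Mrun_cons st rs o os :
  Mrun st rs (o :: os) = maxn (max_overlap st rs) (Mrun (step st o).1 (upd_rules rs o) os).
Proof. by rewrite /Mrun /= big_cons. Qed.

Lemma Mrun_head st rs os : max_overlap st rs <= Mrun st rs os.
Proof. by case: os => [|o os]; rewrite /Mrun /= big_cons leq_maxl. Qed.

Lemma fin_cons st o os : fin st (o :: os) = fin (step st o).1 os.
Proof. by rewrite /fin /=; case: os. Qed.

Lemma Inv_count k m nid O rs i : Inv k m nid O rs i ->
  size m <= 2 * count (fun p : nat * nat => p.1 < MAXK k) m.
Proof.
case=> Hs H0 HM Hle _ _ _ _.
have Hu : uniq (unzip1 m) := sorted_uniq ltn_trans ltnn Hs.
have H1 : count (predC (fun p : nat * nat => p.1 < MAXK k)) m = 1.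
  have Hc : count_mem (MAXK k) (unzip1 m) = 1 by rewrite count_uniq_mem // HM.
  rewrite /unzip1 count_map in Hc; rewrite -Hc.
  apply: eq_in_count => p Hp /=; rewrite -leqNgt.
  have := allP Hle _ (map_f _ Hp); rewrite /= eqn_leq => ->; by [].
have H2 : 0 < count (fun p : nat * nat => p.1 < MAXK k) m.
  rewrite -has_count; apply/hasP; move: H0 => /mapP [p Hp E]; exists p => //.
  by rewrite -E expn_gt0.
have := count_predC (fun p : nat * nat => p.1 < MAXK k) m.
rewrite H1; lia.
Qed.

Lemma main k E R : forall ops st rs i, Inv k (amap st) (next_id st) (owner st) rs i ->
  valid_from k E rs ops -> i + size ops <= R ->
  [/\ size (amap st) <= size (amap (fin st ops)),
      size (amap (fin st ops)) <= 2 * count (fun p : nat * nat => p.1 < MAXK k) (amap (fin st ops)) &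
      run_cost st ops + 5 * R * size (amap st) <=
        size ops * (10 * size (amap (fin st ops)) * lg (Mrun st rs ops)) + 5 * R * size (amap (fin st ops))].
Proof.
elim=> [|o os IH] st rs i Hinv Hv HR.
  by rewrite /fin /=; split=> //; (exact: Inv_count Hinv || lia).
move: Hv => [Ho [_ Hv]].
rewrite fin_cons Mrun_cons.
have -> : run_cost st (o :: os) = (step st o).2 + run_cost (step st o).1 os by [].
have -> : size (o :: os) = (size os).+1 by [].
have HR' : i.+1 + size os <= R by move: HR => /=; lia.
clear HR.
case: o Ho Hv => r [Hwf Hr] Hv.
- case: Hwf => /andP [Hlh HhM] _.
  have HlM : lo r <= MAXK k by apply: leq_trans (ltnW Hlh) HhM.
  have [J1 J2 J3] := insert_spec (R := R) Hinv HhM HlM (leq_trans (leq_addr _ _) (ltnW HR')).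
  have [K1 K2 K3] := IH _ _ _ J1 Hv HR'.
  split=> //; first exact: leq_trans J2 K1.
  have -> : step st (Ins r) = insert_rule r st by [].
  have -> : upd_rules rs (Ins r) = r :: rs by [].
  set st' := (insert_rule r st).1 in J1 J2 J3 K1 K2 K3 *.
  set Nf := size (amap (fin st' os)) in K1 K2 K3 *.
  set X := lg (maxn _ _).
  have HX1 : lg (mo (amap st') (r :: rs)) <= X.
    by apply: lg_mono; rewrite -mo_E; apply: leq_trans (Mrun_head _ _ os) (leq_maxr _ _).
  have HX2 : lg (Mrun st' (r :: rs) os) <= X by apply: lg_mono; exact: leq_maxr.
  have HA : 9 * size (amap st') * lg (mo (amap st') (r :: rs)) <= 10 * Nf * X.
    by apply: leq_mul => //; apply: leq_mul.
  have HB : size os * (10 * Nf * lg (Mrun st' (r :: rs) os)) <= size os * (10 * Nf * X).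
    by rewrite leq_mul2l leq_mul2l HX2 !orbT.
  have HC : 5 * R * size (amap st') <= 5 * R * Nf by rewrite leq_mul2l K1 orbT.
  rewrite [(size os).+1 * _]mulSn.
  lia.
- have [J1 J2 J3] := remove_spec Hinv Hr.
  have [K1 K2 K3] := IH _ _ _ J1 Hv HR'.
  split=> //; first by rewrite -J2.
  have -> : step st (Rem r) = remove_rule r st by [].
  have -> : upd_rules rs (Rem r) = rem r rs by [].
  set st' := (remove_rule r st).1 in J1 J2 J3 K1 K2 K3 *.
  set Nf := size (amap (fin st' os)) in K1 K2 K3 *.
  set X := lg (maxn _ _).
  have HX1 : lg (mo (amap st) rs) <= X by apply: lg_mono; rewrite -mo_E; exact: leq_maxl.
  have HX2 : lg (Mrun st' (rem r rs) os) <= X by apply: lg_mono; exact: leq_maxr.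
  have J2' : size (amap st') = size (amap st) by rewrite J2.
  have HA : 8 * size (amap st) * lg (mo (amap st) rs) <= 10 * Nf * X.
    by apply: leq_mul => //; apply: leq_mul => //; rewrite -J2'.
  have HB : size os * (10 * Nf * lg (Mrun st' (rem r rs) os)) <= size os * (10 * Nf * X).
    by rewrite leq_mul2l leq_mul2l HX2 !orbT.
  rewrite [(size os).+1 * _]mulSn.
  rewrite J2' in K3.
  lia.
Qed.

Unset Implicit Arguments.


Lemma init_inv k : Inv k (amap (init_state k)) (next_id (init_state k)) (owner (init_state k)) [::] 0.
Proof.
have Hp : 0 < MAXK k by rewrite /MAXK expn_gt0.
split => //=.
- by rewrite andbT.
- by rewrite !inE eqxx orbT.
- by rewrite leqnn.
- by move=> x _; split=> //; rewrite /sumsz big_nil.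
Qed.

Lemma arith_fin (R Nf K X c a : nat) : Nf <= 2 * K -> 0 < X ->
  c + a <= R * (10 * Nf * X) + 5 * R * Nf -> c <= 30 * R * K * X.
Proof.
move=> h1 h2 h3.
have A : R * (10 * Nf * X) <= R * (10 * (2 * K) * X) by rewrite leq_mul2l leq_mul2r leq_mul2l h1 !orbT.
have B : 5 * R * Nf <= 5 * R * (2 * K) by rewrite leq_mul2l h1 orbT.
have C : R * K <= R * K * X by rewrite leq_pmulr.
lia.
Qed.

Theorem theorem1 :
  exists c : nat, forall (k : nat) (E : rel nat) (ops : seq op),
    0 < k -> valid_from k E [::] ops ->
    run_cost (init_state k) ops
      <= c * size ops * num_atoms k ops * lg (max_overlap_run k ops).
Proof.
exists 30 => k E ops _ Hv.
have [_ H2 H3] := main (R := size ops) (init_inv k) Hv (leqnn _).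
exact: arith_fin H2 (lg_gt0 _) H3.
Qed.
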